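(* Let $G=G_1\ast\cdots\ast G_m\ast F_N$ be a countable group ($F_N$ free of finite rank), $\mathcal{F}=\{[G_1],\dots,[G_m]\}$, and $k\ge 1$ an integer. Let $T$ be a small minimal $(G,\mathcal{F})$-tree and $(T_n)_{n\in\mathbb{N}}$ a sequence of $k$-tame $(G,\mathcal{F})$-trees converging to $T$ in the equivariant Gromov–Hausdorff topology. Then $T$ is $k$-tame. (That is, the set of $k$-tame trees is closed in the space of small minimal $(G,\mathcal{F})$-trees.)
   Context: Peripheral: conjugate into some $G_i$. $(G,\mathcal{F})$-tree: $\mathbb{R}$-tree with isometric $G$-action in which every peripheral subgroup fixes a unique point. Small: arc stabilizers trivial or cyclic non-peripheral; minimal: no proper nonempty invariant subtree. $\mathrm{Fix}(g)$ is the fixed point set of $g$. A small minimal $(G,\mathcal{F})$-tree is $k$-tame if for every non-peripheral $g\in G$ and every $l\ge1$, $\mathrm{Fix}(g^l)\subseteq\mathrm{Fix}(g^k)$. Convergence $T_n\to T$ in the equivariant Gromov–Hausdorff topology: for every finite $K\subset T$, finite $P\subset G$, $\epsilon>0$, for all large $n$ there exist finite $K_n\subset T_n$ and $R\subseteq K\times K_n$ with surjective projections such that $|d_T(gx,hy)-d_{T_n}(gx',hy')|<\epsilon$ for all $(x,x'),(y,y')\in R$ and $g,h\in P$. *)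

(* Defs.v *)
From Stdlib Require Import Reals List ZArith.
Open Scope R_scope.

Record Group := {
  gcar :> Type;
  gmul : gcar -> gcar -> gcar;
  gone : gcar;
  ginv : gcar -> gcar;
  gmulA : forall x y z, gmul x (gmul y z) = gmul (gmul x y) z;
  gmul1l : forall x, gmul gone x = x;
  gmul1r : forall x, gmul x gone = x;
  gmulVl : forall x, gmul (ginv x) x = gone;
  gmulVr : forall x, gmul x (ginv x) = gone }.

Arguments gmul {g}. Arguments gone {g}. Arguments ginv {g}.

Fixpoint gpow {G : Group} (g : G) (n : nat) : G :=
  match n with O => gone | S n' => gmul g (gpow g n') end.

Definition gzpow {G : Group} (g : G) (z : Z) : G :=
  match z with
  | Z0 => gone
  | Zpos p => gpow g (Pos.to_nat p)
  | Zneg p => gpow (ginv g) (Pos.to_nat p)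
  end.

Definition countable_group (G : Group) : Prop :=
  exists f : nat -> G, forall g : G, exists n, f n = g.

Definition is_subgroup {G : Group} (H : G -> Prop) : Prop :=
  H gone /\ (forall a b, H a -> H b -> H (gmul a b)) /\ (forall a, H a -> H (ginv a)).

(** * Internal free product G = H_0 * ... * H_{m-1} * F_N,
      F_N free on x_0, ..., x_{N-1}, via unique reduced normal forms. *)
Definition letter (G : Group) : Type := ((nat * G) + (nat * bool))%type.

Definition letter_valid {G : Group} (m N : nat) (Hs : nat -> G -> Prop)
  (l : letter G) : Prop :=
  match l with
  | inl (i, a) => (i < m)%nat /\ Hs i a /\ a <> gone
  | inr (j, _) => (j < N)%nat
  end.

Definition letter_eval {G : Group} (x : nat -> G) (l : letter G) : G :=
  match l with
  | inl (_, a) => a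
  | inr (j, true) => x j
  | inr (j, false) => ginv (x j)
  end.

Definition letters_adj_ok {G : Group} (l1 l2 : letter G) : Prop :=
  match l1, l2 with
  | inl (i, _), inl (i', _) => i <> i'
  | inr (j, b), inr (j', b') => ~ (j = j' /\ b <> b')
  | _, _ => True
  end.

Fixpoint adj_chain {G : Group} (w : list (letter G)) : Prop :=
  match w with
  | l1 :: ((l2 :: _) as t) => letters_adj_ok l1 l2 /\ adj_chain t
  | _ => True
  end.

Definition reduced_word {G : Group} (m N : nat) (Hs : nat -> G -> Prop)
  (w : list (letter G)) : Prop :=
  Forall (letter_valid m N Hs) w /\ adj_chain w.

Definition word_eval {G : Group} (x : nat -> G) (w : list (letter G)) : G :=
  fold_right (fun l acc => gmul (letter_eval x l) acc) gone w.

Definition is_free_product (G : Group) (m : nat) (Hs : nat -> G -> Prop)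
  (N : nat) (x : nat -> G) : Prop :=
  (forall i, (i < m)%nat -> is_subgroup (Hs i)) /\
  (forall g : G, exists! w, reduced_word m N Hs w /\ word_eval x w = g).

Definition peripheral {G : Group} (m : nat) (Hs : nat -> G -> Prop) (g : G) : Prop :=
  exists i h a, (i < m)%nat /\ Hs i a /\ g = gmul h (gmul a (ginv h)).

(** * R-trees with an isometric G-action
    (R-tree = nonempty geodesic 0-hyperbolic metric space) *)
Record RTreeAction (G : Group) := {
  tpt :> Type;
  td : tpt -> tpt -> R;
  tact : G -> tpt -> tpt;
  t_inhab : inhabited tpt;
  td_refl : forall x, td x x = 0;
  td_sep : forall x y, td x y = 0 -> x = y;
  td_sym : forall x y, td x y = td y x;
  td_tri : forall x y z, td x z <= td x y + td y z;
  t_geodesic : forall x y, exists f : R -> tpt,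
      f 0 = x /\ f (td x y) = y /\
      forall s t, 0 <= s <= td x y -> 0 <= t <= td x y ->
        td (f s) (f t) = Rabs (s - t);
  t_0hyp : forall x y z w,
      td x y + td z w <= Rmax (td x z + td y w) (td x w + td y z);
  tact_one : forall p, tact gone p = p;
  tact_mul : forall g h p, tact (gmul g h) p = tact g (tact h p);
  tact_isom : forall g p q, td (tact g p) (tact g q) = td p q }.

Arguments td {G r}. Arguments tact {G r}.

Section TreeDefs.
Context {G : Group} (m : nat) (Hs : nat -> G -> Prop).

Definition in_segment {T : RTreeAction G} (x y z : T) : Prop :=
  td x z + td z y = td x y.

Definition Fix {T : RTreeAction G} (g : G) : T -> Prop := fun p => tact g p = p.

Definition GF_tree (T : RTreeAction G) : Prop :=
  forall i h, (i < m)%nat ->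
    exists! p : T, forall a, Hs i a -> tact (gmul h (gmul a (ginv h))) p = p.

Definition arc_stab {T : RTreeAction G} (x y : T) (g : G) : Prop :=
  forall z, in_segment x y z -> tact g z = z.

Definition small_tree (T : RTreeAction G) : Prop :=
  forall x y : T, x <> y ->
    (forall g, arc_stab x y g <-> g = gone) \/
    (exists g, (forall h, arc_stab x y h <-> exists z : Z, h = gzpow g z)
               /\ ~ peripheral m Hs g).

Definition subtree {T : RTreeAction G} (S : T -> Prop) : Prop :=
  (exists p, S p) /\ forall x y z, S x -> S y -> in_segment x y z -> S z.

Definition minimal_tree (T : RTreeAction G) : Prop :=
  forall S : T -> Prop, subtree S -> (forall g p, S p -> S (tact g p)) ->
    forall p, S p.

Definition k_tame (k : nat) (T : RTreeAction G) : Prop :=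
  GF_tree T /\ small_tree T /\ minimal_tree T /\
  forall g : G, ~ peripheral m Hs g -> forall l : nat, (1 <= l)%nat ->
    forall p : T, Fix (gpow g l) p -> Fix (gpow g k) p.

End TreeDefs.

Definition eqGH_converges {G : Group} (Ts : nat -> RTreeAction G)
  (T : RTreeAction G) : Prop :=
  forall (K : list T) (P : list G) (eps : R), 0 < eps ->
  exists N0 : nat, forall n : nat, (N0 <= n)%nat ->
  exists (Kn : list (Ts n)) (Rel : T -> Ts n -> Prop),
    (forall p p', Rel p p' -> In p K /\ In p' Kn) /\
    (forall p, In p K -> exists p', Rel p p') /\
    (forall p', In p' Kn -> exists p, Rel p p') /\
    (forall p p' q q' g h, Rel p p' -> Rel q q' -> In g P -> In h P ->
       Rabs (td (tact g p) (tact h q) - td (tact g p') (tact h q')) < eps).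

(* Main.v *)
Require Import Defs.
From Stdlib Require Import Reals List ZArith.
From Stdlib Require Import Lra Lia.

Open Scope R_scope.

Section Geo.
Context {G : Group} (T : RTreeAction G).

Lemma td_nonneg (x y : T) : 0 <= td x y.
Proof. pose proof (td_tri _ _ x y x). rewrite td_refl, (td_sym _ _ y x) in H. lra. Qed.

Lemma gpow_comm (c : G) n : gmul c (gpow c n) = gmul (gpow c n) c.
Proof.
  induction n; simpl. rewrite gmul1l, gmul1r; auto.
  rewrite IHn at 1. rewrite gmulA. reflexivity.
Qed.

Lemma gpow_add (c : G) a b : gpow c (a + b) = gmul (gpow c a) (gpow c b).
Proof.
  induction a; simpl. rewrite gmul1l; auto.
  rewrite IHa, gmulA; auto.
Qed.

Lemma gpow_mul (c : G) a b : gpow (gpow c a) b = gpow c (a * b).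
Proof.
  induction b; simpl. rewrite Nat.mul_0_r; auto.
  rewrite IHb, Nat.mul_succ_r, Nat.add_comm, gpow_add; auto.
Qed.

Lemma pow_fix (c : G) (m : T) n : tact c m = m -> tact (gpow c n) m = m.
Proof.
  intro H; induction n; simpl. apply tact_one.
  rewrite tact_mul, IHn, H; auto.
Qed.

Lemma tri_pow (h : G) (q : T) n :
  td q (tact (gpow h n) q) <= INR n * td q (tact h q).
Proof.
  induction n; simpl gpow.
  - rewrite tact_one, td_refl. simpl; lra.
  - rewrite tact_mul, S_INR.
    pose proof (td_tri _ _ q (tact h q) (tact h (tact (gpow h n) q))).
    rewrite tact_isom in H. lra.
Qed.

Lemma midpoint (c : G) (q : T) :
  td q (tact c (tact c q)) <= td q (tact c q) ->
  exists m, tact c m = m /\ 2 * td q m = td q (tact c q).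
Proof.
  intro H.
  remember (td q (tact c q)) as D eqn:ED.
  assert (HD : 0 <= D) by (rewrite ED; apply td_nonneg).
  destruct (t_geodesic _ _ q (tact c q)) as [f [f0 [f1 fd]]].
  rewrite <- ED in f1, fd.
  set (m := f (D/2)).
  assert (Hqm : td q m = D/2).
  { unfold m. rewrite <- f0 at 1. rewrite fd by lra. rewrite Rabs_left1; lra. }
  assert (Hmc : td m (tact c q) = D/2).
  { unfold m. rewrite <- f1 at 1. rewrite fd by lra. rewrite Rabs_left1; lra. }
  exists m. split; [|lra].
  set (m' := tact c m).
  assert (H1 : td m' (tact c q) = D/2).
  { unfold m'. rewrite tact_isom, td_sym. lra. }
  assert (H2 : td m' (tact c (tact c q)) = D/2).
  { unfold m'. rewrite tact_isom. lra. }
  pose proof (t_0hyp _ _ m' q (tact c q) (tact c (tact c q))) as A.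
  rewrite H1, H2 in A.
  assert (Hcc : td (tact c q) (tact c (tact c q)) = D) by (rewrite tact_isom; auto).
  rewrite Hcc in A.
  assert (A' : td m' q <= D/2).
  { unfold Rmax in A; destruct Rle_dec; lra. }
  pose proof (t_0hyp _ _ m m' (tact c q) q) as B.
  rewrite Hmc, (td_sym _ _ m q), Hqm, (td_sym _ _ (tact c q) q) in B.
  rewrite <- ED in B.
  rewrite H1 in B.
  pose proof (td_nonneg m m').
  assert (Z : td m m' = 0).
  { unfold Rmax in B; destruct Rle_dec; lra. }
  symmetry. apply td_sep. exact Z.
Qed.

Lemma ell_crit (c : G) (q m : T) :
  tact c m = m -> td q (tact c (tact c q)) <= td q (tact c q).
Proof.
  intro Hm.
  pose proof (t_0hyp _ _ q (tact c (tact c q)) (tact c q) m) as A.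
  assert (E1 : td (tact c q) m = td q m) by (rewrite <- Hm at 1; apply tact_isom).
  assert (E2 : td (tact c (tact c q)) m = td q m)
    by (rewrite <- Hm at 1; rewrite tact_isom; exact E1).
  assert (E3 : td (tact c (tact c q)) (tact c q) = td q (tact c q))
    by (rewrite tact_isom, td_sym; auto).
  rewrite E1, E2, E3 in A.
  unfold Rmax in A; destruct Rle_dec; lra.
Qed.

Lemma hyp_lemma (c : G) (q : T) :
  td q (tact c (tact c q)) > td q (tact c q) ->
  forall n, (1 <= n)%nat -> td q (tact (gpow c n) q) >= td q (tact c q).
Proof.
  intros H.
  set (u := fun n => td q (tact (gpow c n) q)).
  remember (td q (tact c q)) as D eqn:ED.
  assert (U1 : u 1%nat = D).
  { unfold u; simpl. rewrite tact_mul, tact_one, ED; auto. }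
  assert (U2 : u 2%nat = td q (tact c (tact c q))).
  { unfold u; simpl. rewrite !tact_mul, tact_one; auto. }
  assert (Key : forall n, u (S n) + u (S n) <= Rmax (D + D) (u (S (S n)) + u n)).
  { intro n.
    pose proof (t_0hyp _ _ q (tact (gpow c (S n)) q) (tact c q) (tact (gpow c (S (S n))) q)) as A.
    assert (W : tact (gpow c (S (S n))) q = tact c (tact (gpow c (S n)) q))
      by (simpl; rewrite tact_mul; auto).
    rewrite W in A.
    rewrite (tact_isom _ _ c q) in A.
    assert (Y : td (tact (gpow c (S n)) q) (tact c (tact (gpow c (S n)) q)) = D).
    { rewrite <- tact_mul, gpow_comm, tact_mul, tact_isom, ED; auto. }
    rewrite Y in A.
    assert (Z : td (tact (gpow c (S n)) q) (tact c q) = u n).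
    { simpl gpow. rewrite tact_mul, tact_isom, td_sym; auto. }
    rewrite Z in A. rewrite <- W, <- ED in A. exact A. }
  set (a := td q (tact c (tact c q)) - D).
  assert (P : forall n, u (S (S n)) - u (S n) >= a /\ u (S (S n)) > D).
  { induction n.
    - rewrite U1, U2. unfold a. lra.
    - destruct IHn as [I1 I2]. pose proof (Key (S n)) as K.
      assert (u (S (S (S n))) + u (S n) >= u (S (S n)) + u (S (S n))).
      { unfold Rmax in K; destruct Rle_dec; lra. }
      assert (a > 0) by (unfold a; lra).
      lra. }
  intros n Hn. destruct n. lia. destruct n.
  - change (u 1%nat >= D). lra.
  - destruct (P n). change (u (S (S n)) >= D). lra.
Qed.

Lemma tame_bound (g : G) (k l : nat) (q : T) :
  (1 <= k)%nat -> (1 <= l)%nat ->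
  (forall n, (1 <= n)%nat -> forall p : T, tact (gpow g n) p = p -> tact (gpow g k) p = p) ->
  td q (tact (gpow g k) q) <= INR k * td q (tact (gpow g l) q).
Proof.
  intros Hk Hl Ht.
  set (h := gpow g k). set (C := gpow h l).
  assert (HC : C = gpow g (k * l)) by (unfold C, h; apply gpow_mul).
  assert (Step : td q (tact h q) <= td q (tact C q)).
  { destruct (Rle_lt_dec (td q (tact C (tact C q))) (td q (tact C q))) as [Hle|Hlt].
    - destruct (midpoint C q Hle) as [m [Hm Hm2]].
      assert (Hhm : tact h m = m).
      { apply (Ht (k * l)%nat). nia. rewrite <- HC; auto. }
      pose proof (td_tri _ _ q m (tact h q)).
      rewrite <- Hhm in H at 2. rewrite tact_isom, (td_sym _ _ m q) in H. lra.
    - destruct (Rle_lt_dec (td q (tact h (tact h q))) (td q (tact h q))) as [Hle2|Hlt2].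
      + destruct (midpoint h q Hle2) as [m [Hm _]].
        pose proof (ell_crit C q m (pow_fix h m l Hm)). lra.
      + pose proof (hyp_lemma h q Hlt2 l Hl). fold C in H. lra. }
  assert (C = gpow (gpow g l) k) by (rewrite HC, gpow_mul, Nat.mul_comm; auto).
  pose proof (tri_pow (gpow g l) q k). rewrite <- H in H0. fold h. lra.
Qed.

End Geo.

Theorem proposition6p4 :
  forall (G : Group) (m : nat) (Hs : nat -> G -> Prop) (N : nat) (x : nat -> G)
         (k : nat),
    countable_group G ->
    is_free_product G m Hs N x ->
    (1 <= k)%nat ->
    forall (T : RTreeAction G) (Ts : nat -> RTreeAction G),
      GF_tree m Hs T -> small_tree m Hs T -> minimal_tree T ->
      (forall n, k_tame m Hs k (Ts n)) ->
      eqGH_converges Ts T ->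
      k_tame m Hs k T.
Proof.
  intros G m Hs N x k _ _ Hk T Ts HGF Hsm Hmin Htame Hconv.
  split; [exact HGF|split; [exact Hsm|split; [exact Hmin|]]].
  intros g Hg l Hl p Hp. unfold Fix in *.
  set (d := td (tact (gpow g k) p) p).
  assert (Hd0 : 0 <= d) by apply td_nonneg.
  assert (Hd : d = 0).
  { destruct (Rle_lt_dec d 0) as [Hle|Hlt]; [lra|exfalso].
    assert (Hk' : 1 <= INR k) by (apply (le_INR 1); exact Hk).
    set (eps := d / (INR k + 2)).
    assert (Heps : 0 < eps) by (unfold eps; apply Rdiv_lt_0_compat; lra).
    destruct (Hconv (p :: nil) (gone :: gpow g l :: gpow g k :: nil) eps Heps) as [N0 HN].
    destruct (HN N0 (le_n _)) as [Kn [Rel [_ [Hex [_ Hdist]]]]].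
    destruct (Hex p (or_introl eq_refl)) as [p' Hpp'].
    pose proof (Hdist p p' p p' (gpow g l) gone Hpp' Hpp') as D1.
    pose proof (Hdist p p' p p' (gpow g k) gone Hpp' Hpp') as D2.
    simpl In in D1, D2.
    specialize (D1 ltac:(tauto) ltac:(tauto)).
    specialize (D2 ltac:(tauto) ltac:(tauto)).
    rewrite !tact_one in D1, D2. rewrite Hp, td_refl in D1.
    fold d in D2.
    destruct (Htame N0) as [_ [_ [_ Tn]]].
    pose proof (tame_bound (Ts N0) g k l p' Hk Hl (fun n Hn q Hq => Tn g Hg n Hn q Hq)) as B.
    rewrite (td_sym _ _ p' (tact (gpow g l) p')) in B.
    rewrite (td_sym _ _ p' (tact (gpow g k) p')) in B.
    apply Rabs_def2 in D2. destruct D2 as [D2a D2b].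
    rewrite Rabs_left1 in D1 by (pose proof (td_nonneg _ (tact (gpow g l) p') p'); lra).
    assert (d < eps + INR k * eps).
    { assert (INR k * td (tact (gpow g l) p') p' <= INR k * eps).
      { apply Rmult_le_compat_l; lra. }
      lra. }
    assert (eps + INR k * eps < d).
    { unfold eps. field_simplify; [|lra]. apply Rmult_lt_reg_r with (INR k + 2); [lra|].
      unfold Rdiv. rewrite Rmult_assoc, Rinv_l by lra. lra. }
    lra. }
  apply td_sep. exact Hd.
Qed.
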